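(* Let $\mathbb{F}\in\{\mathbb{R},\mathbb{C}\}$, $A\in\mathbb{F}^{m\times n}$, $b\in\mathbb{F}^m$, $f:\mathbb{F}^n\to[0,\infty]$ and $K\ge1$. Let $x',x''$ be distinct stationary points of $\mathcal{K}_{reg}(x)=\mathcal{Q}_2(f)(x)+\|Ax-b\|_2^2$ such that $x''-x'\in P_K$, and set $z'=(I-A^*A)x'+A^*b$, $z''=(I-A^*A)x''+A^*b$. Then $$\mathrm{Re}\langle z''-z',x''-x'\rangle\le(1-\beta_K^2)\|x''-x'\|_2^2.$$
   Context: $\mathcal{Q}_2(f)$ is the quadratic envelope of $f$: $\mathcal{Q}_2(f)(x)=\breve h(x)-\|x\|^2$, where $\breve h$ is the lower semicontinuous convex envelope of $h(x)=f(x)+\|x\|^2$. $\mathrm{card}(x)$ is the number of nonzero entries, $P_K=\{x:\mathrm{card}(x)\le K\}$, $\beta_K=\inf\{\|Ax\|_2/\|x\|_2:x\ne0,\ x\in P_K\}$. $A^*$ is the conjugate transpose, $\langle x,y\rangle=\sum_i x_i\overline{y_i}$. A stationary point of a function $g$ is a point $x$ with $0$ in the Fréchet subdifferential $\hat\partial g(x)$, i.e. the set of $v$ with $\liminf_{y\to x,y\ne x}(g(y)-g(x)-\mathrm{Re}\langle v,y-x\rangle)/\|y-x\|\ge0$. *)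

(* Defs.v *)
From HB Require Import structures.
From mathcomp Require Import all_boot all_order all_algebra.
From mathcomp Require Import all_classical all_reals.
From mathcomp Require Import ereal.
From mathcomp Require Import complex.
Set Implicit Arguments. Unset Strict Implicit. Unset Printing Implicit Defensive.
Import Order.TTheory GRing.Theory Num.Theory.
Local Open Scope ring_scope.
Local Open Scope classical_set_scope.

(* Generic setting: the scalar field F is either R or C = R[i]; it is given
   together with its real part  re : F -> R, its conjugation  cj : F -> F and
   the embedding  ofR : R -> F  of the reals. *)
Section Generic.
Variables (R : realType) (F : nzRingType) (re : F -> R) (cj : F -> F)
  (ofR : R -> F).

Definition redot n (x y : 'cV[F]_n) : R := re (\sum_i x i 0 * cj (y i 0)).
Definition nrm n (x : 'cV[F]_n) : R := Num.sqrt (redot x x).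
Definition adj m n (A : 'M[F]_(m, n)) : 'M[F]_(n, m) := map_mx cj A^T.
Definition card n (x : 'cV[F]_n) : nat := #|[set i : 'I_n | x i 0 != 0]|.
Definition PK n (K : nat) : set 'cV[F]_n := [set x | (card x <= K)%N].
Definition betaK m n (A : 'M[F]_(m, n)) (K : nat) : R :=
  inf [set nrm (A *m x) / nrm x | x in [set x | x != 0 /\ PK K x]].

Definition convex_fun n (g : 'cV[F]_n -> \bar R) : Prop :=
  forall (x y : 'cV[F]_n) (t : R), 0 <= t <= 1 ->
    (g (ofR t *: x + ofR (1 - t) *: y)%R <= t%:E * g x + (1 - t)%:E * g y)%E.
Definition lsc_fun n (g : 'cV[F]_n -> \bar R) : Prop :=
  forall x (a : R), (a%:E < g x)%E ->
    exists2 d : R, 0 < d & forall y, nrm (y - x) < d -> (a%:E < g y)%E.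
Definition lsc_conv_env n (h : 'cV[F]_n -> \bar R) (x : 'cV[F]_n) : \bar R :=
  ereal_sup [set g x | g in
    [set g : 'cV[F]_n -> \bar R | [/\ convex_fun g, lsc_fun g,
        (forall y, -oo < g y)%E & (forall y, g y <= h y)%E]]].
Definition Q2 n (f : 'cV[F]_n -> \bar R) (x : 'cV[F]_n) : \bar R :=
  (lsc_conv_env (fun y => f y + (nrm y ^+ 2)%:E) x - (nrm x ^+ 2)%:E)%E.
Definition Kreg m n (f : 'cV[F]_n -> \bar R) (A : 'M[F]_(m, n)) (b : 'cV[F]_m)
  (x : 'cV[F]_n) : \bar R := (Q2 f x + (nrm (A *m x - b) ^+ 2)%:E)%E.

(* Frechet subdifferential: v in  hat-partial g(x)  iff g(x) is finite and
   liminf_{y -> x, y <> x} (g y - g x - Re<v, y - x>) / ||y - x|| >= 0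
   (the liminf condition written out in epsilon-delta form). *)
Definition frechet_subdiff n (g : 'cV[F]_n -> \bar R) (x v : 'cV[F]_n) : Prop :=
  g x \is a fin_num /\
  forall e : R, 0 < e -> exists2 d : R, 0 < d & forall y,
    0 < nrm (y - x) < d ->
    (g x + (redot v (y - x) - e * nrm (y - x))%:E <= g y)%E.
Definition stationary n (g : 'cV[F]_n -> \bar R) (x : 'cV[F]_n) : Prop :=
  frechet_subdiff g x 0.

Definition prop31_claim : Prop :=
  forall (m n : nat) (A : 'M[F]_(m, n)) (b : 'cV[F]_m)
         (f : 'cV[F]_n -> \bar R) (K : nat) (x' x'' : 'cV[F]_n),
    (forall x, (0 <= f x)%E) -> (1 <= K)%N ->
    x' != x'' ->
    stationary (Kreg f A b) x' -> stationary (Kreg f A b) x'' ->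
    PK K (x'' - x') ->
    let z' := (1%:M - adj A *m A) *m x' + adj A *m b in
    let z'' := (1%:M - adj A *m A) *m x'' + adj A *m b in
    redot (z'' - z') (x'' - x') <= (1 - betaK A K ^+ 2) * nrm (x'' - x') ^+ 2.

End Generic.

Definition prop31_real (R : realType) : Prop :=
  @prop31_claim R R id id id.
Definition prop31_complex (R : realType) : Prop :=
  @prop31_claim R (complex.complex R) (@complex.Re R) (@complex.conjc R)
    (fun r => complex.real_complex_def (Phant R) r).

(* Main.v *)
Require Import Defs.
From mathcomp Require Import all_boot all_order all_algebra.
From mathcomp Require Import all_classical all_reals.
From mathcomp Require Import ereal complex lra.
Import Order.TTheory GRing.Theory Num.Theory.
Local Open Scope ring_scope.
Local Open Scope classical_set_scope.

Section Gen.
Variables (R : realType) (F : comNzRingType) (re : F -> R) (cj : F -> F)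
  (ofR : R -> F).
Hypothesis reD : forall x y, re (x + y) = re x + re y.
Hypothesis cjD : forall x y, cj (x + y) = cj x + cj y.
Hypothesis cjM : forall x y, cj (x * y) = cj x * cj y.
Hypothesis re_ge0 : forall x, 0 <= re (x * cj x).

Lemma re0 : re 0 = 0.
Proof. by have := reD 0 0; rewrite addr0 => /esym; rewrite -{3}[re 0]addr0 => /addrI. Qed.

Lemma reN x : re (- x) = - re x.
Proof. by apply/eqP; rewrite -subr_eq0 opprK -reD addNr re0. Qed.

Lemma reB x y : re (x - y) = re x - re y.
Proof. by rewrite reD reN. Qed.

Lemma re_sum I (r : seq I) (P : pred I) (G : I -> F) :
  re (\sum_(i <- r | P i) G i) = \sum_(i <- r | P i) re (G i).
Proof. by apply: (big_morph re reD re0). Qed.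

Lemma cj0 : cj 0 = 0.
Proof. by have := cjD 0 0; rewrite addr0 => /esym; rewrite -{3}[cj 0]addr0 => /addrI. Qed.

Lemma cj_sum I (r : seq I) (P : pred I) (G : I -> F) :
  cj (\sum_(i <- r | P i) G i) = \sum_(i <- r | P i) cj (G i).
Proof. by apply: (big_morph cj cjD cj0). Qed.

Lemma redotB n (u v w : 'cV[F]_n) :
  redot re cj (u - v) w = redot re cj u w - redot re cj v w.
Proof.
rewrite /redot -reB -sumrB; congr re; apply: eq_bigr => i _.
by rewrite !mxE mulrBl.
Qed.

Lemma redot_ge0 n (u : 'cV[F]_n) : 0 <= redot re cj u u.
Proof. by rewrite /redot re_sum; apply: sumr_ge0 => i _. Qed.

Lemma redot_adj m n (A : 'M[F]_(m, n)) (y : 'cV[F]_m) (d : 'cV[F]_n) :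
  redot re cj (adj cj A *m y) d = redot re cj y (A *m d).
Proof.
rewrite /redot; congr re.
under eq_bigr => i _ do rewrite !mxE big_distrl /=.
rewrite exchange_big /=; apply: eq_bigr => j _.
rewrite !mxE cj_sum big_distrr /=; apply: eq_bigr => i _.
by rewrite !mxE cjM mulrA [cj _ * _]mulrC.
Qed.

Lemma nrm_sq n (u : 'cV[F]_n) : nrm re cj u ^+ 2 = redot re cj u u.
Proof. by rewrite /nrm sqr_sqrtr // redot_ge0. Qed.

Lemma nrm_ge0 n (u : 'cV[F]_n) : 0 <= nrm re cj u.
Proof. exact: sqrtr_ge0. Qed.

Lemma claim : prop31_claim re cj ofR.
Proof.
move=> m n A b f K x' x'' _ _ neq _ _ PKd /=.
set d := x'' - x'.
have -> : (1%:M - adj cj A *m A) *m x'' + adj cj A *m b -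
  ((1%:M - adj cj A *m A) *m x' + adj cj A *m b) =
  d - adj cj A *m (A *m d).
  by rewrite opprD addrACA subrr addr0 -mulmxBr mulmxBl mul1mx mulmxA.
rewrite redotB redot_adj -!nrm_sq.
set a := nrm re cj d; set c := nrm re cj (A *m d).
set B := betaK re cj A K.
have dn0 : d != 0 by rewrite subr_eq0 eq_sym.
have hinf : has_inf [set nrm re cj (A *m x) / nrm re cj x | x in
    [set x | x != 0 /\ PK (F:=F) K x]].
  split; first by exists (c / a); exists d.
  by exists 0 => _ [x _ <-]; rewrite divr_ge0 // nrm_ge0.
have B0 : 0 <= B.
  apply: lb_le_inf; first by exists (c / a); exists d.
  by move=> _ [x _ <-]; rewrite divr_ge0 // nrm_ge0.
have Ble : B <= c / a by apply: (ge_inf hinf.2); exists d.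
have a0 : 0 <= a := nrm_ge0 _ _; have c0 : 0 <= c := nrm_ge0 _ _.
have [->|ap] := eqVneq a 0.
  by rewrite expr0n /= mulr0 subr_le0 sqr_ge0.
have apos : 0 < a by rewrite lt_def ap a0.
have : B * a <= c by rewrite -ler_pdivlMr.
move=> h; have h2 : (B * a) ^+ 2 <= c ^+ 2.
  by rewrite ler_sqr // ?nnegrE ?mulr_ge0.
nra.
Qed.
End Gen.

Theorem proposition3p1 (R : realType) : prop31_real R /\ prop31_complex R.
Proof.
split.
- apply: claim => // x; exact: sqr_ge0.
- apply: claim.
  + by move=> [a b] [c d].
  + by move=> x y; rewrite rmorphD.
  + by move=> x y; rewrite rmorphM.
  + move=> [a b] /=; rewrite mulrN opprK; apply: addr_ge0; exact: sqr_ge0.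
Qed.
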